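(* Work in the ring $\mathcal O_{\mathbb{Q}(\sqrt{-3})}=\mathbb{Z}[\frac{1+\sqrt{-3}}{2}]$. If $a$ and $b$ are relatively prime positive integers and $3$ divides $a$ in $\mathbb{Z}$, then there is no nonzero $z\in\mathcal O_{\mathbb{Q}(\sqrt{-3})}$ with $I_2^*(z)=a/b$.
   Context: $\mathcal O_{\mathbb{Q}(\sqrt{-3})}$ is a unique factorization domain. $|z|=\sqrt{z\bar z}$, $\arg(z)\in[0,2\pi)$. Let $A$ be the set of nonzero $z\in\mathcal O_{\mathbb{Q}(\sqrt{-3})}$ with $0\le \arg(z)<\pi/3$. Two elements are relatively prime if they have no nonunit common divisor. For nonzero $x,z$, write $x\Diamond z$ iff $x\in A$, $x\mid z$, and $x$ is relatively prime to $z/x$. For $m\in\mathbb{Z}$ define $\delta_m^*(z)=\sum_{x\Diamond z}|x|^m$ and $I_m^*(z)=\delta_m^*(z)/|z|^m$. *)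

(* Defs.v *)
From mathcomp Require Import all_boot all_order all_algebra.
Set Implicit Arguments. Unset Strict Implicit. Unset Printing Implicit Defensive.
Import Order.TTheory GRing.Theory Num.Theory.
Local Open Scope ring_scope.

(* Eisenstein integers O_{Q(sqrt -3)} = Z[w], w = (1 + sqrt(-3))/2, w^2 = w - 1.
   The pair (p, q) : int * int represents p + q w. *)
Definition eis := (int * int)%type.

Definition ezero : eis := (0, 0).
Definition eone : eis := (1, 0).

(* (p + q w)(r + s w) = (pr - qs) + (ps + qr + qs) w *)
Definition emul (x y : eis) : eis :=
  (x.1 * y.1 - x.2 * y.2, x.1 * y.2 + x.2 * y.1 + x.2 * y.2).

(* |p + q w|^2 = (p + q/2)^2 + 3 q^2 / 4 = p^2 + p q + q^2 *)
Definition enorm (x : eis) : int := x.1 ^+ 2 + x.1 * x.2 + x.2 ^+ 2.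

Definition edvd (x z : eis) : Prop := exists w, z = emul x w.

Definition eunit (u : eis) : Prop := exists v, emul u v = eone.

Definition erelprime (x y : eis) : Prop :=
  forall d, edvd d x -> edvd d y -> eunit d.

(* A : nonzero z with 0 <= arg z < pi/3.  For z = p + q w we have
   Re z = p + q/2, Im z = q sqrt(3)/2; so Im z >= 0 <-> q >= 0, and
   (given Im z >= 0, z <> 0) arg z < pi/3 <-> Im z < sqrt 3 * Re z <-> p > 0. *)
Definition inA (x : eis) : Prop := 0 < x.1 /\ 0 <= x.2.

Definition diamond (x z : eis) : Prop :=
  inA x /\ exists w, z = emul x w /\ erelprime x w.

(* delta2_is z d  <->  d = delta_2^*(z) = sum_{x <> z} |x|^2
   (the set {x | x <> z} is finite for z <> 0; s enumerates it without repetition) *)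
Definition delta2_is (z : eis) (d : rat) : Prop :=
  exists s : seq eis, uniq s /\ (forall x, x \in s <-> diamond x z) /\
    d = \sum_(x <- s) (enorm x)%:~R.

Definition I2_is (z : eis) (r : rat) : Prop :=
  exists d, delta2_is z d /\ r = d / (enorm z)%:~R.

(* Main.v *)
Require Import Defs.
From mathcomp Require Import all_boot all_order all_algebra.
From mathcomp Require Import zify ring.
From Stdlib Require Import Classical ClassicalEpsilon.
Import Order.TTheory GRing.Theory Num.Theory.
Set Implicit Arguments. Unset Strict Implicit.
Local Open Scope ring_scope.

Definition eadd (x y : eis) : eis := (x.1 + y.1, x.2 + y.2).
Definition eopp (x : eis) : eis := (- x.1, - x.2).
Definition econj (x : eis) : eis := (x.1 + x.2, - x.2).

Lemma emulC x y : emul x y = emul y x.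
Proof. case: x y => [a b] [c d]; rewrite /emul /=; congr pair; ring. Qed.
Lemma emulA x y z : emul x (emul y z) = emul (emul x y) z.
Proof. case: x y z => [a b] [c d] [e f]; rewrite /emul /=; congr pair; ring. Qed.
Lemma emul1 x : emul eone x = x.
Proof. case: x => [a b]; rewrite /emul /=; congr pair; ring. Qed.
Lemma emul0 x : emul x ezero = ezero.
Proof. case: x => [a b]; rewrite /emul /=; congr pair; ring. Qed.
Lemma emulDr x y z : emul x (eadd y z) = eadd (emul x y) (emul x z).
Proof. case: x y z => [a b] [c d] [e f]; rewrite /emul /eadd /=; congr pair; ring. Qed.
Lemma enormM x y : enorm (emul x y) = enorm x * enorm y.
Proof. case: x y => [a b] [c d]; rewrite /emul /enorm /=; ring. Qed.
Lemma emul_conj x : emul x (econj x) = (enorm x, 0).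
Proof. case: x => [a b]; rewrite /emul /econj /enorm /=; congr pair; ring. Qed.
Lemma enorm_ge0 x : 0 <= enorm x.
Proof. case: x => [a b]; rewrite /enorm /=; nia. Qed.
Lemma enorm_eq0 x : enorm x = 0 -> x = ezero.
Proof. case: x => [a b]; rewrite /enorm /ezero /= => H.
have Ha : a = 0 by nia. have Hb : b = 0 by nia. by rewrite Ha Hb. Qed.

Lemma ecancel d a b : d <> ezero -> emul d a = emul d b -> a = b.
Proof.
move=> dn0 E.
have E2 : emul (econj d) (emul d a) = emul (econj d) (emul d b) by rewrite E.
clear E; rewrite !emulA (emulC (econj d)) emul_conj in E2.
have Nd : enorm d != 0 by apply/eqP => /enorm_eq0.
move: E2; case: a b => [a1 a2] [b1 b2]; rewrite /emul /= !mul0r ?subr0 ?addr0 ?add0r => -[].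
by move=> /(mulfI Nd) -> /(mulfI Nd) ->.
Qed.

Lemma eunit_norm u : eunit u <-> enorm u = 1.
Proof.
split.
- case=> v E. have := enormM u v; rewrite E /enorm /= => H.
  have := enorm_ge0 u; have := enorm_ge0 v. move: H; rewrite -!/(enorm _) expr2 !mulr0 mulr1 !addr0 => H. move=> h1 h2. have : enorm u <> 0 by move=> E0; rewrite E0 mul0r in H. have : enorm v <> 0 by move=> E0; rewrite E0 mulr0 in H. move=> a b. nia.
- move=> H; exists (econj u); by rewrite emul_conj H.
Qed.

Lemma edvd_refl x : edvd x x.
Proof. exists eone; by rewrite emulC emul1. Qed.
Lemma edvd_trans x y z : edvd x y -> edvd y z -> edvd x z.
Proof. move=> [a ->] [b ->]; exists (emul a b); by rewrite emulA. Qed.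
Lemma edvd_mulr x y : edvd x (emul x y).
Proof. by exists y. Qed.
Lemma edvd_mull x y : edvd x (emul y x).
Proof. by exists y; rewrite emulC. Qed.
Lemma edvd_mul2 d x y : edvd d x -> edvd d (emul x y).
Proof. move=> H; apply: edvd_trans H (edvd_mulr _ _). Qed.
Lemma edvd_mul2l d x y : edvd d y -> edvd d (emul x y).
Proof. move=> H; rewrite emulC; exact: edvd_mul2. Qed.

Lemma eunit_dvd1 u : eunit u <-> edvd u eone.
Proof. split=> [[v E]|[v E]]; exists v => //. Qed.

Lemma eunit_dvd u x : eunit u -> edvd u x.
Proof. move=> [v E]; exists (emul v x); by rewrite emulA E emul1. Qed.

Lemma dvd_unit d u : edvd d u -> eunit u -> eunit d.
Proof. move=> H /eunit_dvd1 H2; apply/eunit_dvd1; exact: edvd_trans H H2. Qed.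

Lemma enorm_gt1 x : x <> ezero -> ~ eunit x -> 1 < enorm x.
Proof.
move=> xn0 nu; have := enorm_ge0 x.
have : enorm x <> 0 by move/enorm_eq0.
have : enorm x <> 1 by move/eunit_norm.
lia.
Qed.

Lemma emul_eq0 x y : emul x y = ezero -> x = ezero \/ y = ezero.
Proof.
move=> E; have := enormM x y; rewrite E /enorm /= => H.
have : enorm x * enorm y = 0 by rewrite -H; lia.
move/eqP; rewrite mulf_eq0 => /orP[/eqP/enorm_eq0|/eqP/enorm_eq0]; tauto.
Qed.

Lemma eunit_mul u v : eunit u -> eunit v -> eunit (emul u v).
Proof. move=> /eunit_norm a /eunit_norm b; apply/eunit_norm; by rewrite enormM a b mulr1. Qed.

Lemma round_bound (A n : int) : 0 < n -> exists q, - n <= 2 * (A - q * n) <= n.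
Proof.
move=> n0; set d := 2 * n.
have dn0 : d != 0 by rewrite /d; lia.
have h1 := divz_eq (2 * A + n) d.
have h2 := modz_ge0 (2 * A + n) dn0.
have h3 := @ltz_pmod (2 * A + n) d ltac:(rewrite /d; lia).
exists ((2 * A + n) %/ d)%Z. move: h1 h2 h3.
set q := ((2 * A + n) %/ d)%Z; set m := ((2 * A + n) %% d)%Z; rewrite /d. nia.
Qed.

Lemma ediv x y : y <> ezero -> exists q r, x = eadd (emul q y) r /\ enorm r < enorm y.
Proof.
move=> yn0; have n0 : 0 < enorm y.
  have := enorm_ge0 y; have : enorm y <> 0 by move/enorm_eq0. lia.
set n := enorm y.
have [q1 Hq1] := @round_bound (emul x (econj y)).1 n n0.
have [q2 Hq2] := @round_bound (emul x (econj y)).2 n n0.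
set q := (q1, q2).
set r := eadd x (eopp (emul q y)).
exists q, r; split.
  case: x y @q @r {yn0 n0 Hq1 Hq2 n} => [a b] [c d] /=; rewrite /eadd /eopp /emul /=.
  congr pair; ring.
have key : emul r (econj y) = eadd (emul x (econj y)) (eopp (q1 * n, q2 * n)).
  rewrite /r /n.
  case: x y @q {yn0 n0 Hq1 Hq2 n r} => [a b] [c d] /=; rewrite /eadd /eopp /emul /econj /enorm /=.
  congr pair; ring.
have hn := enormM r (econj y).
have hc : enorm (econj y) = n by rewrite /n; case: (y) => c d; rewrite /enorm /econj /=; ring.
rewrite key hc in hn. move: hn Hq1 Hq2.
case: (emul x (econj y)) => A B /=; rewrite /enorm /eadd /eopp /=.
move=> hn h1 h2.
have := enorm_ge0 r. rewrite /enorm. nia.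
Qed.

Lemma edvd_add d x y : edvd d x -> edvd d y -> edvd d (eadd x y).
Proof. move=> [a ->] [b ->]; exists (eadd a b); by rewrite emulDr. Qed.

Lemma edvd_addK d x y : edvd d x -> edvd d (eadd x y) -> edvd d y.
Proof.
move=> [a Ha] [b Hb]; exists (eadd b (eopp a)); rewrite emulDr -Hb Ha.
case: d a y {Ha Hb} => [d1 d2] [a1 a2] [y1 y2]; rewrite /emul /eadd /eopp /=; congr pair; ring.
Qed.

Lemma bezout x y : exists a b, edvd (eadd (emul a x) (emul b y)) x /\
                               edvd (eadd (emul a x) (emul b y)) y.
Proof.
move: {2}(absz (enorm y)).+1 (ltnSn (absz (enorm y))) => n.
elim: n x y => [//|n IH] x y Hy.
case: (classic (y = ezero)) => [->|yn0].
  exists eone, ezero; rewrite emul1 !emul0.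
  have -> : eadd x ezero = x by case: x => ? ?; rewrite /eadd /=; congr pair; ring.
  split; [exact: edvd_refl | exists ezero; by rewrite emul0].
have [q [r [Ex Hr]]] := @ediv x y yn0.
have Hr' : (absz (enorm r) < n)%N.
  have := enorm_ge0 r; move: Hy Hr; lia.
have [a [b [H1 H2]]] := IH y r Hr'.
exists b, (eadd a (eopp (emul b q))).
have -> : eadd (emul b x) (emul (eadd a (eopp (emul b q))) y) = eadd (emul a y) (emul b r).
  rewrite Ex.
  case: a b q r y {Ex Hr Hr' H1 H2 Hy yn0} => [a1 a2] [b1 b2] [q1 q2] [r1 r2] [y1 y2];
  rewrite /emul /eadd /eopp /=; congr pair; ring.
split => //. rewrite Ex; apply: edvd_add => //; exact: edvd_mul2l.
Qed.

Definition eprime p := p <> ezero /\ ~ eunit p /\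
  forall x y, edvd p (emul x y) -> edvd p x \/ edvd p y.

Lemma irred_prime z : z <> ezero -> ~ eunit z ->
  (forall d, edvd d z -> eunit d \/ edvd z d) -> eprime z.
Proof.
move=> zn0 zu H; do 2 split => //.
move=> x y Hxy.
have [a [b [H1 H2]]] := bezout z x.
set g := eadd (emul a z) (emul b x) in H1 H2.
case: (H g H1) => [[v Hv]|Hz]; last by left; exact: edvd_trans Hz H2.
right.
have : edvd z (emul g y).
  rewrite /g emulC emulDr; apply: edvd_add.
    rewrite emulC -emulA; exact: edvd_mul2l (edvd_mulr _ _).
  rewrite emulC -emulA; exact: edvd_mul2l.
move=> Hzy; have := @edvd_mul2l _ v _ Hzy.
by rewrite emulA (emulC v) Hv emul1.
Qed.

Lemma exists_prime z : z <> ezero -> ~ eunit z -> exists p, eprime p /\ edvd p z.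
Proof.
move: {2}(absz (enorm z)).+1 (ltnSn (absz (enorm z))) => n.
elim: n z => [//|n IH] z Hz zn0 zu.
case: (classic (forall d, edvd d z -> eunit d \/ edvd z d)) => [H|].
  exists z; split; [exact: irred_prime | exact: edvd_refl].
move=> Hn; have [d Hd] := not_all_ex_not _ _ Hn. have [[c Ec] H2] := imply_to_and _ _ Hd. have [du nzd] := not_or_and _ _ H2.
have dn0 : d <> ezero by move=> E; apply: zn0; rewrite Ec E emulC emul0.
have cu : ~ eunit c.
  move=> [v Hv]; apply: nzd; exists v; by rewrite Ec -emulA Hv emulC emul1.
have cn0 : c <> ezero by move=> E; apply: zn0; rewrite Ec E emul0.
have Hc := @enorm_gt1 c cn0 cu.
have Hdn : (absz (enorm d) < n)%N.
  have := enormM d c; rewrite -Ec => E.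
  have := enorm_ge0 d; have : enorm d <> 0 by move/enorm_eq0.
  move: Hz; rewrite E. nia.
have [p [pp pd]] := IH d Hdn dn0 du.
exists p; split => //; apply: edvd_trans pd _; exists c; exact: Ec.
Qed.

Definition epow p k := iter k (emul p) eone.

Lemma epowS p k : epow p k.+1 = emul p (epow p k).
Proof. by []. Qed.

Lemma epow_nz p k : p <> ezero -> epow p k <> ezero.
Proof.
move=> pn0; elim: k => [|k IH]; first by rewrite /epow /= /eone /ezero => -[].
rewrite epowS => /emul_eq0; tauto.
Qed.

Lemma enorm_pow p k : enorm (epow p k) = enorm p ^+ k.
Proof.
elim: k => [|k IH]; first by rewrite /epow /= /enorm /=; ring.
by rewrite epowS enormM IH exprS.
Qed.

Lemma prime_pow p k x y : eprime p -> ~ edvd p y ->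
  edvd (epow p k) (emul x y) -> edvd (epow p k) x.
Proof.
move=> [pn0 [pu pP]] npy; elim: k x => [|k IH] x H.
  by apply: eunit_dvd; exists eone; rewrite emul1.
have : edvd p (emul x y) by apply: edvd_trans H; rewrite epowS; exact: edvd_mulr.
move=> /pP [[x' Ex]|//]; subst x.
move: H => [t Et]; rewrite epowS -!emulA in Et.
have := @ecancel _ _ _ pn0 Et => Et'.
have [t' Ht'] : edvd (epow p k) x' by apply: IH; exists t; rewrite Et'.
exists t'; by rewrite epowS Ht' emulA.
Qed.

Lemma prime_dvd_pow r p k : eprime r -> eprime p -> edvd r (epow p k) -> edvd p r.
Proof.
move=> [rn0 [ru rP]] [pn0 [pu pP]]; elim: k => [|k IH].
  by move=> /eunit_dvd1.
rewrite epowS => /rP [[c Ec]|//].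
have : edvd p (emul r c) by rewrite -Ec; exact: edvd_refl.
move=> /pP [//|[t Et]].
exfalso; apply: ru; exists t.
have : emul p eone = emul p (emul r t) by rewrite emulC emul1 {1}Ec Et emulA (emulC r) emulA.
by move/(@ecancel _ _ _ pn0) => <-.
Qed.

Lemma factor_out p z : eprime p -> z <> ezero ->
  exists e w, z = emul (epow p e) w /\ ~ edvd p w.
Proof.
move=> pp; move: {2}(absz (enorm z)).+1 (ltnSn (absz (enorm z))) => n.
elim: n z => [//|n IH] z Hz zn0.
case: (classic (edvd p z)) => [[z' Ez]|npz]; last first.
  by exists 0%N, z; rewrite /epow /= emul1.
have z'n0 : z' <> ezero by move=> E; apply: zn0; rewrite Ez E emul0.
have [pn0 [pu _]] := pp.
have Hp := @enorm_gt1 p pn0 pu.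
have Hn : (absz (enorm z') < n)%N.
  have := enormM p z'; rewrite -Ez => E.
  have := enorm_ge0 z'; have : enorm z' <> 0 by move/enorm_eq0.
  move: Hz; rewrite E. nia.
have [e [w [Ew Hw]]] := IH z' Hn z'n0.
exists e.+1, w; split => //; by rewrite Ez Ew epowS emulA.
Qed.

Lemma relprime_primes x y : x <> ezero ->
  (erelprime x y <-> forall r, eprime r -> edvd r x -> edvd r y -> False).
Proof.
move=> xn0; split.
  move=> H r [_ [ru _]] rx ry; exact: ru (H r rx ry).
move=> H d dx dy; apply: NNPP => du.
have dn0 : d <> ezero by move=> E; move: dx => [t]; rewrite E emulC emul0.
have [r [rp rd]] := @exists_prime d dn0 du.
exact: (H r rp (@edvd_trans _ _ _ rd dx) (@edvd_trans _ _ _ rd dy)).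
Qed.

Lemma unit_cases u : eunit u ->
  u = (1,0) \/ u = (0,1) \/ u = (-1,1) \/ u = (-1,0) \/ u = (0,-1) \/ u = (1,-1).
Proof.
move/eunit_norm; case: u => a b; rewrite /enorm /= => H.
have hb : b = -1 \/ b = 0 \/ b = 1 by nia.
have ha : a = -1 \/ a = 0 \/ a = 1 by nia.
move: H; case: ha => [->|[->|->]]; case: hb => [->|[->|->]]; rewrite /= => H;
  try (exfalso; move: H; rewrite !expr2; lia); do ?[by left | right]; done.
Qed.

Lemma A_eq u x : inA x -> inA (emul u x) -> eunit u -> emul u x = x.
Proof.
case: x => p q; rewrite /inA /= => [[h1 h2]] h34 /unit_cases U; move: U h34.
case=> [->|[->|[->|[->|[->|->]]]]]; rewrite /emul /= => -[h3 h4]; try (exfalso; lia);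
  congr pair; lia.
Qed.

Definition inAb (x : eis) : bool := (0 < x.1) && (0 <= x.2).
Definition U1 : eis := (0, 1).
Definition nrm (x : eis) : eis :=
  if inAb x then x else
  if inAb (emul (0,1) x) then emul (0,1) x else
  if inAb (emul (-1,1) x) then emul (-1,1) x else
  if inAb (emul (-1,0) x) then emul (-1,0) x else
  if inAb (emul (0,-1) x) then emul (0,-1) x else
  if inAb (emul (1,-1) x) then emul (1,-1) x else ezero.

Lemma inAbP x : reflect (inA x) (inAb x).
Proof. by apply: (iffP andP). Qed.

Lemma nrm_spec x : x <> ezero -> inA (nrm x) /\ exists u, eunit u /\ nrm x = emul u x.
Proof.
move=> xn0; rewrite /nrm.
have U : forall u, enorm u = 1 -> eunit u by move=> u /eunit_norm.
case: ifP => [/inAbP H|N1]; first by split => //; exists eone; split; [apply: U|rewrite emul1].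
case: ifP => [/inAbP H|N2]; first by split => //; exists (0,1); split => //; apply: U; rewrite /enorm /= !expr2; lia.
case: ifP => [/inAbP H|N3]; first by split => //; exists (-1,1); split => //; apply: U; rewrite /enorm /= !expr2; lia.
case: ifP => [/inAbP H|N4]; first by split => //; exists (-1,0); split => //; apply: U; rewrite /enorm /= !expr2; lia.
case: ifP => [/inAbP H|N5]; first by split => //; exists (0,-1); split => //; apply: U; rewrite /enorm /= !expr2; lia.
case: ifP => [/inAbP H|N6]; first by split => //; exists (1,-1); split => //; apply: U; rewrite /enorm /= !expr2; lia.
exfalso; move: xn0 N1 N2 N3 N4 N5 N6; case: x => p q; rewrite /inAb /emul /ezero /=.
move=> xn0; have : p <> 0 \/ q <> 0 by case: (p =P 0) => [Ep|]; [case: (q =P 0) => [Eq|]; [exfalso; apply: xn0; rewrite Ep Eq | right] | left].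
lia.
Qed.

Lemma inA_nz x : inA x -> x <> ezero.
Proof. by case: x => p q [h1 h2] [E1 E2]; move: h1; rewrite E1. Qed.

Lemma eunit_nz u : eunit u -> u <> ezero.
Proof. by move=> [v Hv] E; move: Hv; rewrite E emulC emul0 => -[]. Qed.

Lemma emul_swap u x v y :
  emul (emul u x) (emul v y) = emul (emul u v) (emul x y).
Proof. case: u x v y => [a b] [c d] [e f] [g h]; rewrite /emul /=; congr pair; ring. Qed.

Lemma nrm_unit u y : inA y -> eunit u -> nrm (emul u y) = y.
Proof.
move=> Ay uu.
have uyn0 : emul u y <> ezero.
  by move/emul_eq0 => [/(eunit_nz uu)|/(inA_nz Ay)].
have [A1 [u' [u'u E]]] := nrm_spec uyn0.
rewrite E emulA; apply: A_eq => //; first by rewrite -emulA -E.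
exact: eunit_mul.
Qed.

Lemma enorm_unit u x : eunit u -> enorm (emul u x) = enorm x.
Proof. by move=> /eunit_norm H; rewrite enormM H mul1r. Qed.

Definition edivq (d x : eis) : eis :=
  let m := emul x (econj d) in ((m.1 %/ enorm d)%Z, (m.2 %/ enorm d)%Z).

Lemma edivqK d q : d <> ezero -> edivq d (emul d q) = q.
Proof.
move=> dn0; have Nd : enorm d != 0 by apply/eqP => /enorm_eq0.
rewrite /edivq.
have -> : emul (emul d q) (econj d) = (q.1 * enorm d, q.2 * enorm d).
  case: d q {dn0 Nd} => [a b] [c e]; rewrite /emul /econj /enorm /=; congr pair; ring.
rewrite /= !mulzK //; by case: q.
Qed.

Lemma dvd_unit_mul d u x : eunit u -> edvd d (emul u x) -> edvd d x.
Proof.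
move=> [v Hv] H; apply: edvd_trans H _; exists v.
by rewrite -emulA (emulC x v) emulA Hv emul1.
Qed.

Lemma diamond_nrm x y w : x <> ezero -> w = emul x y -> erelprime x y ->
  diamond (nrm x) w.
Proof.
move=> xn0 Ew rp.
have [A1 [u [uu E]]] := nrm_spec xn0.
have uu' := uu; move: uu' => [v Hv].
split => //; exists (emul v y); split.
  by rewrite E emul_swap Hv emul1.
move=> d dx dy; apply: rp.
  by apply: (@dvd_unit_mul _ u) => //; rewrite -E.
apply: (@dvd_unit_mul _ v) => //; exists u; by rewrite emulC Hv.
Qed.


Lemma pP (p w z : eis) (e : nat) (pp : eprime p) (e0 : (0 < e)%N) (Ez : z = emul (epow p e) w) (npw : ~ edvd p w) : edvd p (epow p e).
Proof. by rewrite -(prednK e0) epowS; exact: edvd_mulr. Qed.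

Lemma Pn0 (p w z : eis) (e : nat) (pp : eprime p) (e0 : (0 < e)%N) (Ez : z = emul (epow p e) w) (npw : ~ edvd p w) : (epow p e) <> ezero.
Proof. by apply: epow_nz; case: pp. Qed.

Lemma L1 (p w z : eis) (e : nat) (pp : eprime p) (e0 : (0 < e)%N) (Ez : z = emul (epow p e) w) (npw : ~ edvd p w) x : ~ edvd p x -> (diamond x z <-> diamond x w).
Proof.
move=> npx; split.
  move=> [Ax [y [Exy rp]]]; split => //.
  have : edvd (epow p e) (emul y x) by rewrite emulC -Exy Ez; exact: edvd_mulr.
  move=> /(prime_pow pp npx) [y' Ey'].
  exists y'; split.
    apply: (@ecancel (epow p e)) ; first exact: (Pn0 pp e0 Ez npw).
    by rewrite -Ez Exy Ey' emulA (emulC x) emulA.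
  move=> d dx dy'; apply: rp => //; rewrite Ey'; exact: edvd_mul2l.
move=> [Ax [y [Exy rp]]]; split => //; exists (emul (epow p e) y); split.
  by rewrite Ez Exy emulA (emulC (epow p e)) emulA.
apply/relprime_primes; first exact: inA_nz.
move=> r rp' rx /(proj2 (proj2 rp')) [rP|ry].
  apply: npx; apply: edvd_trans rx; exact: prime_dvd_pow rp' pp rP.
have := rp r rx ry; by case: rp' => _ [].
Qed.

Lemma L2 (p w z : eis) (e : nat) (pp : eprime p) (e0 : (0 < e)%N) (Ez : z = emul (epow p e) w) (npw : ~ edvd p w) x : edvd p x -> diamond x z ->
  exists y, x = emul (epow p e) y /\ diamond (nrm y) w.
Proof.
move=> px [Ax [y [Exy rp]]].
have npy : ~ edvd p y by move=> py; case: pp => _ [pu _]; exact: pu (rp p px py).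
have : edvd (epow p e) (emul x y) by rewrite -Exy Ez; exact: edvd_mulr.
move=> /(prime_pow pp npy) [x' Ex'].
exists x'; split => //.
have x'n0 : x' <> ezero by move=> E; apply: (inA_nz Ax); rewrite Ex' E emul0.
apply: (@diamond_nrm x' y) => //.
  apply: (@ecancel (epow p e)); first exact: (Pn0 pp e0 Ez npw).
  by rewrite -Ez Exy Ex' emulA.
move=> d dx' dy; apply: rp => //; rewrite Ex'; exact: edvd_mul2l.
Qed.

Lemma L3 (p w z : eis) (e : nat) (pp : eprime p) (e0 : (0 < e)%N) (Ez : z = emul (epow p e) w) (npw : ~ edvd p w) y : diamond y w -> diamond (nrm (emul (epow p e) y)) z /\ edvd p (nrm (emul (epow p e) y)).
Proof.
move=> [Ay [t [Eyt rp]]].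
have Pyn0 : emul (epow p e) y <> ezero by move/emul_eq0 => [/(Pn0 pp e0 Ez npw)|/(inA_nz Ay)].
have [_ [u [uu Eu]]] := nrm_spec Pyn0.
split; last by rewrite Eu; apply: edvd_mul2l; apply: edvd_mul2; exact: (pP pp e0 Ez npw).
apply: (@diamond_nrm _ t) => //.
  by rewrite Ez Eyt emulA.
apply/relprime_primes => // r rp' rx rt.
have := rp'; move=> [_ [ru rP]].
case: (rP _ _ rx) => [rPP|ry].
  apply: npw; rewrite Eyt; apply: edvd_mul2l.
  apply: edvd_trans rt; exact: prime_dvd_pow rp' pp rPP.
exact: ru (rp r ry rt).
Qed.


Definition pb (Q : Prop) : bool := if excluded_middle_informative Q then true else false.
Lemma pbP Q : reflect Q (pb Q).
Proof. rewrite /pb; case: excluded_middle_informative => H; by constructor. Qed.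

Definition nz3 (D : int) := exists k, D = 3 * k + 1 \/ D = 3 * k + 2.
Definition r01 (D : int) := exists k, D = 3 * k \/ D = 3 * k + 1.

Lemma norm_r01 x : r01 (enorm x).
Proof.
case: x => p q; rewrite /enorm /=.
have h1 := divz_eq (p - q) 3.
have h2 := @modz_ge0 (p - q) 3 isT.
have h3 := @ltz_pmod (p - q) 3 isT.
move: h1 h2 h3; set m := ((p - q) %/ 3)%Z; set r := ((p - q) %% 3)%Z => h1 h2 h3.
have : r = 0 \/ r = 1 \/ r = 2 by lia.
case=> [E|[E|E]]; rewrite E in h1.
- exists (3 * m ^+ 2 + p * q); left; rewrite !expr2; nia.
- exists (3 * m ^+ 2 + 2 * m + p * q); right; rewrite !expr2; nia.
- exists (3 * m ^+ 2 + 4 * m + p * q + 1); right; rewrite !expr2; nia.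
Qed.

Lemma r01_pow n e : r01 n -> r01 (n ^+ e).
Proof.
move=> [k Hk]; elim: e => [|e [l Hl]]; first by exists 0; right; rewrite expr0; lia.
rewrite exprS; case: Hl => ->; case: Hk => ->.
- by exists (3 * k * l); left; ring.
- by exists (3 * k * l + l); left; ring.
- by exists (3 * k * l + k); left; ring.
- by exists (3 * k * l + l + k); right; ring.
Qed.

Lemma nz3_mul a b : nz3 a -> nz3 b -> nz3 (a * b).
Proof.
move=> [k Hk] [l Hl]; case: Hk => ->; case: Hl => ->.
- by exists (3 * k * l + k + l); left; ring.
- by exists (3 * k * l + 2 * k + l); right; ring.
- by exists (3 * k * l + k + 2 * l); right; ring.
- by exists (3 * k * l + 2 * k + 2 * l + 1); left; ring.
Qed.

Lemma r01_nz3 n : r01 n -> nz3 (n + 1).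
Proof. by move=> [k [->|->]]; exists k; [left|right]; ring. Qed.

Lemma inA1 : inA eone.
Proof. by rewrite /inA /eone /=. Qed.

Lemma unit_case z s : eunit z -> uniq s -> (forall x, x \in s <-> diamond x z) ->
  \sum_(x <- s) enorm x = 1.
Proof.
move=> zu us Hs.
have Hp : perm_eq s [:: eone].
  apply: uniq_perm => // x; rewrite inE; apply/idP/idP.
    move=> /Hs [Ax [y [Ey _]]]; apply/eqP.
    have xu : eunit x by apply: (@dvd_unit _ z) => //; exists y.
    have := @A_eq x eone inA1; rewrite emulC emul1; move=> H; exact: H Ax xu.
  move/eqP => ->; apply/Hs; split; first exact: inA1.
  exists z; split; first by rewrite emul1.
  by move=> d /eunit_dvd1.
rewrite (perm_big _ Hp) big_seq1 /enorm /eone /=; ring.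
Qed.

Lemma main n z s : (absz (enorm z) < n)%N -> z <> ezero -> uniq s ->
  (forall x, x \in s <-> diamond x z) -> nz3 (\sum_(x <- s) enorm x).
Proof.
elim: n z s => [//|n IH] z s Hz zn0 us Hs.
case: (classic (eunit z)) => [zu|zu].
  by rewrite (unit_case zu us Hs); exists 0; left; ring.
have [p [pp pz]] := exists_prime zn0 zu.
have [e [w [Ez npw]]] := factor_out pp zn0.
have e0 : (0 < e)%N.
  case: e Ez => // Ez; exfalso; apply: npw; move: Ez; rewrite /epow /= emul1 => <-; exact: pz.
have wn0 : w <> ezero by move=> E; apply: zn0; rewrite Ez E emul0.
have [pn0 [pu _]] := pp.
have Hw : (absz (enorm w) < n)%N.
  have Hp := enorm_gt1 pn0 pu.
  have E1 : epow p e = emul p (epow p e.-1) by rewrite -epowS prednK.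
  have := enormM (epow p e) w; rewrite -Ez E1 enormM => E.
  have : enorm w <> 0 by move/enorm_eq0.
  have : enorm (epow p e.-1) <> 0 by move/enorm_eq0; apply: epow_nz.
  have := enorm_ge0 w; have := enorm_ge0 (epow p e.-1).
  move=> h1 h2 h3 h4.
  have h5 : 1 <= enorm w by lia.
  have h6 : 1 <= enorm (epow p e.-1) by lia.
  have lt : enorm w < enorm z.
    rewrite E; have : enorm w < enorm p * enorm w by nia.
    have : enorm p * enorm w <= enorm p * (enorm (epow p e.-1) * enorm w) by nia.
    lia.
  move: Hz lt; lia.
set a := fun x => pb (edvd p x).
set s1 := [seq x <- s | ~~ a x].
set s2 := [seq x <- s | a x].
have Hs1 : forall x, x \in s1 <-> diamond x w.
  move=> x; rewrite mem_filter /a; split.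
    by move=> /andP [/pbP npx /Hs]; rewrite -(L1 pp e0 Ez npw npx).
  move=> H; have npx : ~ edvd p x.
    by move=> px; case: H => Ax [y [Ey rp]]; apply: npw; rewrite Ey; exact: edvd_mul2.
  apply/andP; split; first by apply/pbP.
  by apply/Hs; rewrite (L1 pp e0 Ez npw npx).
have IH1 := IH w s1 Hw wn0 (filter_uniq _ us) Hs1.
set g := fun x => nrm (edivq (epow p e) x).
have Pn0 : epow p e <> ezero by apply: epow_nz.
have Hs2 : forall x, x \in s2 -> exists y, x = emul (epow p e) y /\ g x = nrm y /\
             diamond (nrm y) w /\ y <> ezero.
  move=> x; rewrite mem_filter /a => /andP [/pbP px /Hs dx].
  have [y [Ey dy]] := L2 pp e0 Ez npw px dx.
  exists y; split => //; split; first by rewrite /g Ey edivqK.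
  split => // E; case: dx => Ax _; apply: (inA_nz Ax); by rewrite Ey E emul0.
set t := map g s2.
have ut : uniq t.
  rewrite map_inj_in_uniq; first exact: filter_uniq.
  move=> x1 x2 h1 h2 Eg.
  have [y1 [E1 [G1 [_ y1n0]]]] := Hs2 _ h1.
  have [y2 [E2 [G2 [_ y2n0]]]] := Hs2 _ h2.
  have [_ [u1 [uu1 N1]]] := nrm_spec y1n0.
  have [_ [u2 [uu2 N2]]] := nrm_spec y2n0.
  have uu1' := uu1; move: uu1' => [v1 Hv1].
  have Ey : y1 = emul (emul v1 u2) y2.
    rewrite -emulA -N2 -G2 -Eg G1 N1 emulA (emulC v1) Hv1 emul1 //.
  move: h1 h2; rewrite !mem_filter => /andP [_ /Hs [A1 _]] /andP [_ /Hs [A2 _]].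
  have X : x1 = emul (emul v1 u2) x2.
    rewrite E1 E2 Ey; clear; move: (epow p e) v1 u2 y2 => [a1 b1] [c1 d1] [f1 h1] [i1 j1]; rewrite /emul /=; congr pair; ring.
  rewrite X; apply: A_eq => //; first by rewrite -X.
  apply: eunit_mul => //; by exists u1; rewrite emulC.
have Ht : forall y, y \in t <-> diamond y w.
  move=> y; split.
    move=> /mapP [x hx ->]; have [y' [_ [-> [dy _]]]] := Hs2 _ hx; exact: dy.
  move=> dy; have [dz pz'] := L3 pp e0 Ez npw dy.
  apply/mapP; exists (nrm (emul (epow p e) y)).
    by rewrite mem_filter; apply/andP; split; [apply/pbP | apply/Hs].
  have Ay : inA y by case: dy.
  have Pyn0 : emul (epow p e) y <> ezero by move/emul_eq0 => [//|/(inA_nz Ay)].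
  have [_ [u [uu Eu]]] := nrm_spec Pyn0.
  rewrite /g Eu emulA (emulC u) -emulA edivqK // nrm_unit //.
have St : \sum_(x <- t) enorm x = \sum_(x <- s1) enorm x.
  apply: perm_big; apply: uniq_perm => //; first exact: filter_uniq.
  by move=> x; apply/idP/idP => [/Ht/Hs1|/Hs1/Ht].
have S2 : \sum_(x <- s2) enorm x = enorm (epow p e) * \sum_(x <- t) enorm x.
  rewrite big_map mulr_sumr; apply: eq_big_seq => x hx.
  have [y [-> [-> [_ yn0]]]] := Hs2 _ hx.
  have [_ [u [uu ->]]] := nrm_spec yn0.
  by rewrite enormM enorm_unit.
have -> : \sum_(x <- s) enorm x = \sum_(x <- s2) enorm x + \sum_(x <- s1) enorm x.
  by rewrite (bigID a) /= !big_filter.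
rewrite S2 St -{2}(mul1r (\sum_(x <- s1) enorm x)) -mulrDl.
apply: nz3_mul => //; apply: r01_nz3; rewrite enorm_pow; apply: r01_pow; exact: norm_r01.
Qed.
Unset Implicit Arguments. Set Strict Implicit.

Theorem theorem2p4 (a b : nat) :
  (0 < a)%N -> (0 < b)%N -> coprime a b -> (3 %| a)%N ->
  ~ (exists z : eis, z <> ezero /\ I2_is z (a%:R / b%:R)).
Proof.
move=> a0 b0 cop d3 [z [zn0 [d [[s [us [Hs Ed]]] Er]]]].
have := @main (absz (enorm z)).+1 z s (ltnSn _) zn0 us Hs.
set S := \sum_(x <- s) enorm x => HS.
have EdS : d = S%:~R by rewrite Ed /S rmorph_sum.
have Nn0 : enorm z != 0 by apply/eqP => /enorm_eq0.
have bn0 : (b%:R : rat) != 0 by rewrite pnatr_eq0 -lt0n.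
have Nn0' : ((enorm z)%:~R : rat) != 0 by rewrite intr_eq0.
move: Er; rewrite EdS => /eqP; rewrite eqr_div // => /eqP.
change ((a%:Z)%:~R * (enorm z)%:~R = S%:~R * (b%:Z)%:~R :> rat -> False).
rewrite -!intrM => /intr_inj E.
have nb : ~~ (3 %| b)%N.
  apply/negP => d3b; move: cop; rewrite /coprime => /eqP g1.
  have : (3 %| gcdn a b)%N by rewrite dvdn_gcd d3 d3b.
  by rewrite g1.
have [kb Hb] : exists k, b%:Z = 3 * k + 1 \/ b%:Z = 3 * k + 2.
  exists (b %/ 3)%N%:Z; move: nb; lia.
have [ka Ha] : exists k, a%:Z = 3 * k by exists (a %/ 3)%N%:Z; move: d3; lia.
have [k Hk] := nz3_mul HS (ex_intro _ kb Hb).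
move: E; rewrite Ha => E.
case: Hk; rewrite -E; lia.
Qed.
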